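(* Let $\mathbf{V}\in\mathbb{R}^{N\times N}$ with $\mathbf{V}\boldsymbol\mu=\boldsymbol\mu$ and $\mathbf{A}\in\mathbb{R}^{T\times N}$ with $\mathbf{1}_T^\top\mathbf{A}=\mathbf{1}_N^\top$. Then $$\mathbb{E}\nabla_{\mathbf{V}}l=\|\mathbf{A}\|_\mu^2\mathbf{V}\operatorname{diag}(\boldsymbol\mu)+(1-\|\mathbf{A}\|_\mu^2)\boldsymbol\mu\boldsymbol\mu^\top-\langle\mathbf{Q},\mathbf{A}\rangle_\mu\mathbf{P}\operatorname{diag}(\boldsymbol\mu)-(1-\langle\mathbf{Q},\mathbf{A}\rangle_\mu)\boldsymbol\mu\boldsymbol\mu^\top,$$ and for every $k\in[N]$, $$\mathbb{E}\nabla_{\mathbf{a}^{(k)}}l=\mu_k(\|\mathbf{V}\|_\mu^2-\|\boldsymbol\mu\|^2)\mathbf{a}^{(k)}+\mu_k\|\boldsymbol\mu\|^2\mathbf{1}-\mu_k\langle\mathbf{V},\mathbf{P}\rangle_\mu\mathbf{q}^{(k)}-\mu_k\|\boldsymbol\mu\|^2(\mathbf{1}-\mathbf{q}^{(k)}).$$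
   Context: Let $\mathbf{P}\in\mathbb{R}^{N\times N}$ have nonnegative entries with columns summing to $1$, and let $\boldsymbol\mu\in\mathbb{R}^N$ be a probability vector with $\mathbf{P}\boldsymbol\mu=\boldsymbol\mu$. Let $\mathbf{Q}=(\mathbf{q}^{(1)},\dots,\mathbf{q}^{(N)})\in\mathbb{R}^{T\times N}$ with each $\mathbf{q}^{(k)}$ a probability vector. Data: $x_1,\dots,x_{T+1}$ i.i.d. with law $\boldsymbol\mu$ on $[N]$, and $x_o\in[N]$ with $\Pr(x_o=n\mid x_{T+1}=k,x_1,\dots,x_T)=\sum_tq^{(k)}_tP_{n,x_t}$; $\mathbf{X}=(\mathbf{e}_{x_1},\dots,\mathbf{e}_{x_T})\in\mathbb{R}^{N\times T}$. The loss is $l=\frac12\|\mathbf{e}_{x_o}-\mathbf{V}\mathbf{X}\mathbf{A}\mathbf{e}_{x_{T+1}}\|^2$, with $\mathbf{a}^{(k)}$ the $k$-th column of $\mathbf{A}$; $\nabla_{\mathbf{V}}l$ and $\nabla_{\mathbf{a}^{(k)}}l$ are its gradients, and $\mathbb{E}$ is expectation over $(x_1,\dots,x_{T+1},x_o)$ with $\mathbf{V},\mathbf{A}$ fixed. For matrices $\mathbf{M},\mathbf{M}'$ with $N$ columns, $\langle\mathbf{M},\mathbf{M}'\rangle_\mu=\operatorname{Tr}(\mathbf{M}\operatorname{diag}(\boldsymbol\mu)\mathbf{M}'^\top)$ and $\|\mathbf{M}\|_\mu^2=\langle\mathbf{M},\mathbf{M}\rangle_\mu$; $\|\boldsymbol\mu\|$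 is Euclidean; $\mathbf{1}$ is the all-ones vector in $\mathbb{R}^T$. *)

(* Defs.v *)
From HB Require Import structures.
From mathcomp Require Import all_boot all_order all_algebra.
From mathcomp Require Import all_classical all_reals all_analysis.
Set Implicit Arguments. Unset Strict Implicit. Unset Printing Implicit Defensive.
Import Order.TTheory GRing.Theory Num.Theory.
Local Open Scope ring_scope.

Section Defs.
Variables (R : realType) (N T : nat).

Definition Xmat (x : {ffun 'I_T -> 'I_N}) : 'M[R]_(N, T) :=
  \matrix_(n < N, t < T) (x t == n)%:R.

Definition evec (n : 'I_N) : 'cV[R]_N := \col_(i < N) (i == n)%:R.

(* loss l = 1/2 || e_{x_o} - V X A e_{x_{T+1}} ||^2, with x_{T+1} = k *)
Definition loss (V : 'M[R]_N) (A : 'M[R]_(T, N))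
    (x : {ffun 'I_T -> 'I_N}) (k o : 'I_N) : R :=
  2^-1 * \sum_(n < N) ((evec o - V *m Xmat x *m col k A) n 0) ^+ 2.

Definition gradV (V : 'M[R]_N) (A : 'M[R]_(T, N))
    (x : {ffun 'I_T -> 'I_N}) (k o : 'I_N) : 'M[R]_N :=
  \matrix_(i < N, j < N)
     derive1 (fun s : R => loss (V + s *: delta_mx i j) A x k o) 0.

Definition gradA (V : 'M[R]_N) (A : 'M[R]_(T, N)) (c : 'I_N)
    (x : {ffun 'I_T -> 'I_N}) (k o : 'I_N) : 'cV[R]_T :=
  \col_(t < T)
     derive1 (fun s : R => loss V (A + s *: delta_mx t c) x k o) 0.

(* joint probability of (x_1..x_T, x_{T+1} = k, x_o = o) *)
Definition jointw (mu : 'cV[R]_N) (P : 'M[R]_N) (Q : 'M[R]_(T, N))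
    (x : {ffun 'I_T -> 'I_N}) (k o : 'I_N) : R :=
  (\prod_(t < T) mu (x t) 0) * mu k 0 * (\sum_(t < T) Q t k * P o (x t)).

Definition Expect (m n : nat) (mu : 'cV[R]_N) (P : 'M[R]_N) (Q : 'M[R]_(T, N))
    (f : {ffun 'I_T -> 'I_N} -> 'I_N -> 'I_N -> 'M[R]_(m, n)) : 'M[R]_(m, n) :=
  \sum_(x : {ffun 'I_T -> 'I_N}) \sum_(k < N) \sum_(o < N)
     jointw mu P Q x k o *: f x k o.

Definition ipmu (m : nat) (mu : 'cV[R]_N) (M M' : 'M[R]_(m, N)) : R :=
  \tr (M *m diag_mx mu^T *m M'^T).

Definition sqnorm (mu : 'cV[R]_N) : R := \sum_(i < N) mu i 0 ^+ 2.

End Defs.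

(* Main.v *)
Require Import Defs.
From HB Require Import structures.
From mathcomp Require Import all_boot all_order all_algebra.
From mathcomp Require Import all_classical all_reals all_analysis.
From mathcomp Require Import ring lra.
Import Order.TTheory GRing.Theory Num.Theory.
Local Open Scope ring_scope.
Set Implicit Arguments. Unset Strict Implicit.

Lemma deriv_quad (R : realType) (a b c : R) :
  derive1 (fun s : R => a + s * b + s ^+ 2 * c) 0 = b.
Proof.
have -> : (fun s : R => a + s * b + s ^+ 2 * c) = horner (a%:P + b *: 'X + c *: 'X^2).
  by apply: funext => s; rewrite !hornerD !hornerZ hornerX hornerXn hornerC; ring.
rewrite -derivE !derivD !derivZ derivX derivXn derivC.
rewrite !hornerD !hornerZ hornerC hornerMn hornerXn.
by rewrite hornerC /= expr1 mul0rn mulr0 add0r addr0 mulr1.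
Qed.

Lemma deriv_loss (R : realType) (N : nat) (r d : 'I_N -> R) :
  derive1 (fun s : R => 2^-1 * \sum_(n < N) (r n - s * d n) ^+ 2) 0
  = - \sum_(n < N) r n * d n.
Proof.
have -> : (fun s : R => 2^-1 * \sum_(n < N) (r n - s * d n) ^+ 2) =
  (fun s => 2^-1 * \sum_(n < N) r n ^+ 2 + s * (- \sum_(n < N) r n * d n)
     + s ^+ 2 * (2^-1 * \sum_(n < N) d n ^+ 2)).
  apply: funext => s; rewrite !mulr_sumr -sumrN !mulr_sumr -!big_split /=.
  by apply: eq_bigr => n _; field.
exact: deriv_quad.
Qed.

Section S.
Variables (R : realType) (N T : nat).

Lemma VXaE (V : 'M[R]_N) (A : 'M[R]_(T, N)) (x : {ffun 'I_T -> 'I_N}) (k n : 'I_N) :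
  (V *m Xmat R x *m col k A) n 0 = \sum_(t < T) A t k * V n (x t).
Proof.
rewrite -mulmxA mxE.
under eq_bigr => m _ do rewrite mxE mulr_sumr.
rewrite exchange_big /=; apply: eq_bigr => t _.
rewrite (bigD1 (x t)) //= big1 ?addr0.
  by rewrite !mxE eqxx mul1r mulrC.
by move=> m /negPf hm; rewrite !mxE eq_sym hm mul0r mulr0.
Qed.

Lemma XaE (A : 'M[R]_(T, N)) (x : {ffun 'I_T -> 'I_N}) (k n : 'I_N) :
  (Xmat R x *m col k A) n 0 = \sum_(t < T) A t k * (x t == n)%:R.
Proof.
have := VXaE 1%:M A x k n; rewrite mul1mx => ->.
by apply: eq_bigr => t _; rewrite mxE eq_sym.
Qed.

Lemma evec_subE (o n : 'I_N) (M : 'cV[R]_N) :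
  (evec R o - M) n 0 = (n == o)%:R - M n 0.
Proof. by rewrite !mxE. Qed.

Lemma gradV_E (V : 'M[R]_N) (A : 'M[R]_(T, N)) (x : {ffun 'I_T -> 'I_N}) (k o i j : 'I_N) :
  gradV V A x k o i j = (\sum_(t < T) A t k * V i (x t) - (i == o)%:R)
                         * \sum_(s < T) A s k * (x s == j)%:R.
Proof.
rewrite mxE /loss.
have -> : (fun s : R => 2^-1 * \sum_(n < N)
   ((evec R o - (V + s *: delta_mx i j) *m Xmat R x *m col k A) n 0) ^+ 2)
  = (fun s => 2^-1 * \sum_(n < N) (((n == o)%:R - \sum_(t < T) A t k * V n (x t))
      - s * ((n == i)%:R * \sum_(t < T) A t k * (x t == j)%:R)) ^+ 2).
  apply: funext => s; congr (_ * _); apply: eq_bigr => n _.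
  rewrite evec_subE VXaE; congr (_ ^+ 2).
  rewrite -addrA -opprD; congr (_ - _).
  rewrite !mulr_sumr -big_split /=; apply: eq_bigr => t _.
  rewrite !mxE; case: (n == i); case: (x t == j); rewrite /=; ring.
rewrite deriv_loss (bigD1 i) //= [\sum_(i0 < N | i0 != i) _]big1 ?addr0.
  by rewrite eqxx mul1r; ring.
by move=> m /negPf hm; rewrite hm mul0r mulr0.
Qed.

Lemma gradA_E (V : 'M[R]_N) (A : 'M[R]_(T, N)) (c : 'I_N) (x : {ffun 'I_T -> 'I_N}) (k o : 'I_N) (t : 'I_T) :
  gradA V A c x k o t 0 = (k == c)%:R *
     (\sum_(n < N) (\sum_(s < T) A s k * V n (x s)) * V n (x t) - V o (x t)).
Proof.
rewrite mxE /loss.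
have -> : (fun s : R => 2^-1 * \sum_(n < N)
   ((evec R o - V *m Xmat R x *m col k (A + s *: delta_mx t c)) n 0) ^+ 2)
  = (fun s => 2^-1 * \sum_(n < N) (((n == o)%:R - \sum_(u < T) A u k * V n (x u))
      - s * ((k == c)%:R * V n (x t))) ^+ 2).
  apply: funext => s; congr (_ * _); apply: eq_bigr => n _.
  rewrite evec_subE VXaE; congr (_ ^+ 2).
  rewrite -addrA -opprD; congr (_ - _).
  under eq_bigr => u _ do rewrite !mxE mulrDl.
  rewrite big_split /=; congr (_ + _).
  rewrite (bigD1 t) //= big1 ?addr0.
    by rewrite eqxx /=; case: (k == c); rewrite /=; ring.
  by move=> u /negPf hu; rewrite hu /= mulr0 mul0r.
rewrite deriv_loss.
under eq_bigr => n _ do rewrite mulrBl.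
rewrite sumrB (bigD1 o) //= [\sum_(i0 < N | i0 != o) _]big1 ?addr0.
  rewrite eqxx mulrBr opprB mulr_sumr mul1r; congr (_ - _).
  by apply: eq_bigr => n _; ring.
by move=> m /negPf hm; rewrite hm mul0r.
Qed.

End S.
Section E.
Variables (R : realType) (N T : nat) (mu : 'cV[R]_N).
Hypothesis Hmu1 : \sum_(i < N) mu i 0 = 1.

Definition wt (x : {ffun 'I_T -> 'I_N}) : R := \prod_(t < T) mu (x t) 0.

Lemma E_prod (F : 'I_T -> 'I_N -> R) :
  \sum_(x : {ffun 'I_T -> 'I_N}) \prod_(t < T) (mu (x t) 0 * F t (x t))
  = \prod_(t < T) \sum_(n < N) mu n 0 * F t n.
Proof. by rewrite (bigA_distr_bigA (fun t n => mu n 0 * F t n)). Qed.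

Lemma prod1 (X : 'I_T -> R) t :
  (forall u, u != t -> X u = 1) -> \prod_(u < T) X u = X t.
Proof. by move=> H; rewrite (bigD1 t) //= big1 ?mulr1. Qed.

Lemma prod2 (X : 'I_T -> R) t s : t != s ->
  (forall u, u != t -> u != s -> X u = 1) -> \prod_(u < T) X u = X t * X s.
Proof.
move=> ts H; rewrite (bigD1 t) //= (bigD1 s) /=; last by rewrite eq_sym.
by rewrite big1 ?mulr1 // => u /andP[ut us]; apply: H.
Qed.

Lemma E_pair (t s : 'I_T) (f g : 'I_N -> R) :
  \sum_(x : {ffun 'I_T -> 'I_N}) wt x * (f (x t) * g (x s))
  = if t == s then \sum_(n < N) mu n 0 * (f n * g n)
    else (\sum_(n < N) mu n 0 * f n) * (\sum_(n < N) mu n 0 * g n).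
Proof.
case: eqP => [<-|/eqP ts].
  pose F u n := if u == t then f n * g n else 1.
  transitivity (\sum_(x : {ffun 'I_T -> 'I_N}) \prod_(u < T) (mu (x u) 0 * F u (x u))).
    apply: eq_bigr => x _; rewrite big_split /= (@prod1 (fun u => F u (x u)) t).
      by rewrite /F eqxx.
    by move=> u /negPf ut; rewrite /F ut.
  rewrite E_prod (@prod1 _ t); first by rewrite /F eqxx.
  move=> u /negPf ut; rewrite /F ut.
  by under eq_bigr => n _ do rewrite mulr1.
pose F u n := if u == t then f n else if u == s then g n else 1.
transitivity (\sum_(x : {ffun 'I_T -> 'I_N}) \prod_(u < T) (mu (x u) 0 * F u (x u))).
  apply: eq_bigr => x _; rewrite big_split /= (@prod2 (fun u => F u (x u)) _ _ ts).
    by rewrite /F eqxx [s == t]eq_sym (negPf ts) eqxx.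
  by move=> u /negPf ut /negPf us; rewrite /F ut us.
rewrite E_prod (@prod2 _ _ _ ts).
  by rewrite /F eqxx eq_sym (negPf ts) eqxx.
move=> u /negPf ut /negPf us; rewrite /F ut us.
by under eq_bigr => n _ do rewrite mulr1.
Qed.

Lemma sum_if (beta : 'I_T -> R) t (X Y : R) :
  \sum_(s < T) beta s * (if t == s then X else Y)
  = beta t * (X - Y) + (\sum_(s < T) beta s) * Y.
Proof.
transitivity (\sum_(s < T) (beta s * Y + (t == s)%:R * (beta s * (X - Y)))).
  by apply: eq_bigr => s _; case: (t == s) => /=; ring.
rewrite big_split /= -mulr_suml [RHS]addrC; congr (_ + _).
rewrite (bigD1 t) //= big1 ?addr0 ?eqxx ?mul1r //.
by move=> s /negPf st; rewrite eq_sym st mul0r.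
Qed.

Lemma E_bil (al be : 'I_T -> R) (f g : 'I_N -> R) :
  \sum_(x : {ffun 'I_T -> 'I_N}) wt x * ((\sum_(t < T) al t * f (x t)) * (\sum_(s < T) be s * g (x s)))
  = (\sum_(t < T) al t * be t) * (\sum_(n < N) mu n 0 * (f n * g n)
        - (\sum_(n < N) mu n 0 * f n) * (\sum_(n < N) mu n 0 * g n))
    + (\sum_(t < T) al t) * (\sum_(s < T) be s)
        * ((\sum_(n < N) mu n 0 * f n) * (\sum_(n < N) mu n 0 * g n)).
Proof.
transitivity (\sum_(t < T) \sum_(s < T) (al t * be s) *
   \sum_(x : {ffun 'I_T -> 'I_N}) wt x * (f (x t) * g (x s))).
  symmetry.
  under eq_bigr => t _ do under eq_bigr => s _ do rewrite mulr_sumr.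
  under eq_bigr => t _ do rewrite exchange_big.
  rewrite exchange_big; apply: eq_bigr => x _ /=.
  rewrite mulr_suml mulr_sumr; apply: eq_bigr => t _.
  rewrite mulr_sumr mulr_sumr; apply: eq_bigr => s _; ring.
under eq_bigr => t _ do under eq_bigr => s _ do rewrite E_pair -mulrA.
under eq_bigr => t _ do rewrite -mulr_sumr sum_if.
under eq_bigr => t _ do rewrite mulrDr.
rewrite big_split /=; congr (_ + _).
  by rewrite [RHS]mulr_suml; apply: eq_bigr => t _; ring.
by rewrite -mulrA [RHS]mulr_suml; apply: eq_bigr => t _; ring.
Qed.


Lemma sum_deltaT (h : 'I_T -> R) t : \sum_(s < T) h s * (s == t)%:R = h t.
Proof.
rewrite (bigD1 t) //= big1 ?addr0 ?eqxx ?mulr1 //.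
by move=> s /negPf st; rewrite st mulr0.
Qed.

Lemma sum_deltaN (h : 'I_N -> R) t : \sum_(s < N) h s * (s == t)%:R = h t.
Proof.
rewrite (bigD1 t) //= big1 ?addr0 ?eqxx ?mulr1 //.
by move=> s /negPf st; rewrite st mulr0.
Qed.

Lemma sum_delta2 (a h : 'I_N -> R) j :
  \sum_(n < N) a n * (h n * (n == j)%:R) = a j * h j.
Proof.
rewrite -(sum_deltaN (fun n => a n * h n) j); apply: eq_bigr => n _; ring.
Qed.

Lemma E_lin (al : 'I_T -> R) (f g : 'I_N -> R) t :
  \sum_(x : {ffun 'I_T -> 'I_N}) wt x * ((\sum_(s < T) al s * f (x s)) * g (x t))
  = al t * (\sum_(n < N) mu n 0 * (f n * g n)
        - (\sum_(n < N) mu n 0 * f n) * (\sum_(n < N) mu n 0 * g n))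
    + (\sum_(s < T) al s)
        * ((\sum_(n < N) mu n 0 * f n) * (\sum_(n < N) mu n 0 * g n)).
Proof.
have := E_bil al (fun s => (s == t)%:R) f g.
rewrite sum_deltaT.
have -> : \sum_(s < T) (s == t)%:R = 1 :> R.
  by have := sum_deltaT (fun _ => 1) t; under eq_bigr => s _ do rewrite mul1r.
rewrite mulr1 => <-; apply: eq_bigr => x _; congr (_ * (_ * _)).
by rewrite -(sum_deltaT (fun s => g (x s)) t); apply: eq_bigr => s _; rewrite mulrC.
Qed.

End E.

Section Main.
Variables (R : realType) (N T : nat)
  (P : 'M[R]_N) (mu : 'cV[R]_N) (Q : 'M[R]_(T, N))
  (V : 'M[R]_N) (A : 'M[R]_(T, N)).
Hypotheses (HP1 : forall j, \sum_(i < N) P i j = 1)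
  (Hmu1 : \sum_(i < N) mu i 0 = 1)
  (HPmu : P *m mu = mu)
  (HQ1 : forall k, \sum_(t < T) Q t k = 1)
  (HVmu : V *m mu = mu)
  (HA1 : forall k, \sum_(t < T) A t k = 1).

Lemma ipmuE m (M M' : 'M[R]_(m, N)) :
  ipmu mu M M' = \sum_(k < N) mu k 0 * \sum_(t < m) M t k * M' t k.
Proof.
rewrite /ipmu /mxtrace mul_mx_diag; under eq_bigr => t _ do rewrite mxE; rewrite exchange_big /=.
apply: eq_bigr => k _; rewrite mulr_sumr; apply: eq_bigr => t _.
by rewrite !mxE; ring.
Qed.

Lemma mvE (M : 'M[R]_N) (HM : M *m mu = mu) i :
  \sum_(n < N) mu n 0 * M i n = mu i 0.
Proof.
have := congr1 (fun X : 'cV[R]_N => X i 0) HM; rewrite /= mxE => <-.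
by apply: eq_bigr => n _; rewrite mulrC.
Qed.

Lemma sumSq (x : {ffun 'I_T -> 'I_N}) k :
  \sum_(o < N) \sum_(t < T) Q t k * P o (x t) = 1.
Proof.
rewrite exchange_big /= -(HQ1 k); apply: eq_bigr => t _.
by rewrite -mulr_sumr HP1 mulr1.
Qed.

Lemma PV x k i j :
  \sum_(o < N) jointw mu P Q x k o * gradV V A x k o i j
  = mu k 0 * (wt mu x * ((\sum_(t < T) A t k * V i (x t)) * \sum_(s < T) A s k * (x s == j)%:R)
     - wt mu x * ((\sum_(t < T) Q t k * P i (x t)) * \sum_(s < T) A s k * (x s == j)%:R)).
Proof.
under eq_bigr => o _ do rewrite gradV_E /jointw.
set Sv := \sum_(t < T) A t k * V i (x t).
set H := \sum_(s < T) A s k * (x s == j)%:R.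
transitivity (\sum_(o < N) (wt mu x * mu k 0 * H * Sv) * (\sum_(t < T) Q t k * P o (x t))
   - \sum_(o < N) (wt mu x * mu k 0 * H) * ((\sum_(t < T) Q t k * P o (x t)) * (o == i)%:R)).
  by rewrite -sumrB; apply: eq_bigr => o _; rewrite /wt eq_sym; ring.
rewrite -!mulr_sumr sumSq sum_deltaN; ring.
Qed.

Lemma partV :
  Expect mu P Q (fun x k o => gradV V A x k o)
    = ipmu mu A A *: (V *m diag_mx mu^T)
      + (1 - ipmu mu A A) *: (mu *m mu^T)
      - ipmu mu Q A *: (P *m diag_mx mu^T)
      - (1 - ipmu mu Q A) *: (mu *m mu^T).
Proof.
apply/matrixP => i j.
rewrite /Expect summxE.
under eq_bigr => x _ do (rewrite summxE; under eq_bigr => k _ do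
  (rewrite summxE; under eq_bigr => o _ do rewrite mxE)).
under eq_bigr => x _ do under eq_bigr => k _ do rewrite PV.
rewrite exchange_big /=.
under eq_bigr => k _ do rewrite -mulr_sumr sumrB (E_bil Hmu1 _ _ (V i) (fun n => (n == j)%:R)) (E_bil Hmu1 _ _ (P i) (fun n => (n == j)%:R)).
rewrite !mvE // !(sum_deltaN (fun n => mu n 0)) !sum_delta2.
under eq_bigr => k _ do rewrite HA1 HQ1.
rewrite !ipmuE !mul_mx_diag !mxE big_ord1 !mxE.
set a := \sum_(k < N) mu k 0 * \sum_(t < T) A t k * A t k.
set b := \sum_(k < N) mu k 0 * \sum_(t < T) Q t k * A t k.
transitivity (a * (mu j 0 * V i j - mu i 0 * mu j 0)
   - b * (mu j 0 * P i j - mu i 0 * mu j 0)); last by ring.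
rewrite /a /b !mulr_suml -sumrB; apply: eq_bigr => k _; ring.
Qed.


Lemma PA x k c t :
  \sum_(o < N) jointw mu P Q x k o * gradA V A c x k o t 0
  = (mu k 0 * (wt mu x * (\sum_(n < N) (\sum_(s < T) A s k * V n (x s)) * V n (x t))
     - \sum_(o < N) wt mu x * ((\sum_(s < T) Q s k * P o (x s)) * V o (x t))))
    * (k == c)%:R.
Proof.
under eq_bigr => o _ do rewrite gradA_E /jointw.
set T1 := \sum_(n < N) (\sum_(s < T) A s k * V n (x s)) * V n (x t).
transitivity (\sum_(o < N) (wt mu x * mu k 0 * (k == c)%:R * T1) * (\sum_(s < T) Q s k * P o (x s))
   - \sum_(o < N) (mu k 0 * (k == c)%:R) * (wt mu x * ((\sum_(s < T) Q s k * P o (x s)) * V o (x t)))).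
  by rewrite -sumrB; apply: eq_bigr => o _; rewrite /wt; ring.
rewrite -!mulr_sumr sumSq; ring.
Qed.

Lemma sumVV (M : 'M[R]_N) :
  \sum_(n < N) \sum_(m < N) mu m 0 * (V n m * M n m) = ipmu mu V M.
Proof.
rewrite ipmuE exchange_big /=; apply: eq_bigr => m _; rewrite mulr_sumr.
by apply: eq_bigr => n _; ring.
Qed.

Lemma lin_sum (a : R) (B m : 'I_N -> R) :
  \sum_(n < N) (a * (B n - m n) + 1 * m n)
  = a * (\sum_(n < N) B n - \sum_(n < N) m n) + \sum_(n < N) m n.
Proof.
rewrite -sumrB mulr_sumr -big_split /=; apply: eq_bigr => n _; ring.
Qed.

Lemma partA c :
    Expect mu P Q (fun x k o => gradA V A c x k o)
      = (mu c 0 * (ipmu mu V V - sqnorm mu)) *: col c A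
        + (mu c 0 * sqnorm mu) *: const_mx 1
        - (mu c 0 * ipmu mu V P) *: col c Q
        - (mu c 0 * sqnorm mu) *: (const_mx 1 - col c Q).
Proof.
apply/matrixP => t z; rewrite [z]ord1.
rewrite /Expect summxE.
under eq_bigr => x _ do (rewrite summxE; under eq_bigr => k _ do
  (rewrite summxE; under eq_bigr => o _ do rewrite mxE)).
under eq_bigr => x _ do under eq_bigr => k _ do rewrite PA.
rewrite exchange_big /=.
under eq_bigr => k _ do rewrite -mulr_suml.
rewrite (sum_deltaN (fun k => \sum_x _)) -mulr_sumr sumrB.
under [X in _ * (X - _)]eq_bigr => x _ do rewrite mulr_sumr.
under [X in _ * (_ - X)]eq_bigr => x _ do idtac.
rewrite [X in _ * (X - _)]exchange_big [X in _ * (_ - X)]exchange_big /=.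
under eq_bigr => n _ do rewrite (E_lin Hmu1 _ (V n) (V n)).
under [X in _ * (_ - X)]eq_bigr => o _ do rewrite (E_lin Hmu1 _ (P o) (V o)).
under eq_bigr => n _ do rewrite !(mvE HVmu).
under [X in _ * (_ - X)]eq_bigr => n _ do rewrite (mvE HVmu) (mvE HPmu).
rewrite HA1 HQ1.
rewrite (lin_sum (A t c) (fun n => \sum_(m < N) mu m 0 * (V n m * V n m))
   (fun n => mu n 0 * mu n 0)).
rewrite (lin_sum (Q t c) (fun n => \sum_(m < N) mu m 0 * (P n m * V n m))
   (fun n => mu n 0 * mu n 0)).
rewrite !sumVV.
have -> : \sum_(n < N) \sum_(m < N) mu m 0 * (P n m * V n m) = ipmu mu V P.
  by rewrite -sumVV; apply: eq_bigr => n _; apply: eq_bigr => m _; ring.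
have -> : \sum_(n < N) mu n 0 * mu n 0 = sqnorm mu.
  by rewrite /sqnorm; apply: eq_bigr => n _; rewrite expr2.
rewrite !mxE; ring.
Qed.

End Main.
Unset Implicit Arguments.
Set Strict Implicit.

Theorem lemmaB7 (R : realType) (N T : nat)
  (P : 'M[R]_N) (mu : 'cV[R]_N) (Q : 'M[R]_(T, N))
  (V : 'M[R]_N) (A : 'M[R]_(T, N))
  (HP0 : forall i j, 0 <= P i j)
  (HP1 : forall j, \sum_(i < N) P i j = 1)
  (Hmu0 : forall i, 0 <= mu i 0)
  (Hmu1 : \sum_(i < N) mu i 0 = 1)
  (HPmu : P *m mu = mu)
  (HQ0 : forall t k, 0 <= Q t k)
  (HQ1 : forall k, \sum_(t < T) Q t k = 1)
  (HVmu : V *m mu = mu)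
  (HA1 : forall k, \sum_(t < T) A t k = 1) :
  Expect mu P Q (fun x k o => gradV V A x k o)
    = ipmu mu A A *: (V *m diag_mx mu^T)
      + (1 - ipmu mu A A) *: (mu *m mu^T)
      - ipmu mu Q A *: (P *m diag_mx mu^T)
      - (1 - ipmu mu Q A) *: (mu *m mu^T)
  /\
  (forall c : 'I_N,
    Expect mu P Q (fun x k o => gradA V A c x k o)
      = (mu c 0 * (ipmu mu V V - sqnorm mu)) *: col c A
        + (mu c 0 * sqnorm mu) *: const_mx 1
        - (mu c 0 * ipmu mu V P) *: col c Q
        - (mu c 0 * sqnorm mu) *: (const_mx 1 - col c Q)).
Proof.
split; first exact: partV.
by move=> c; apply: partA.
Qed.
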